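(* For every $r\ge3$ there is a bijection between the set of partitions of the highest root $\tilde\alpha_{C_r}=2\varepsilon_1$ of type $C_r$ into positive roots of $C_r$ and the set $\mathrm{JS}(\langle2\rangle,\langle2\rangle,r)$. In particular $K_{C_r}(\tilde\alpha_{C_r})=\mathsf{js}(\langle2\rangle,\langle2\rangle,r)$.
   Context: The positive roots of type $C_r$ are $\Phi^+_{C_r}=\{\varepsilon_i-\varepsilon_j,\ \varepsilon_i+\varepsilon_j:1\le i<j\le r\}\cup\{2\varepsilon_i:1\le i\le r\}\subset\mathbb{R}^r$; a partition of $\mu$ is a finite multiset of positive roots summing to $\mu$, and $K_{C_r}(\mu)$ is their number. A juggling state is a finitely supported integer vector $\langle s_1,s_2,\dots\rangle$ indexed by heights (trailing zeros omitted). A juggling sequence of length $n$ from $\mathbf{a}$ to $\mathbf{b}$ is a sequence $(\mathbf{s}_0,\dots,\mathbf{s}_n)$ with $\mathbf{s}_0=\mathbf{a}$, $\mathbf{s}_n=\mathbf{b}$ such that for each $i$ there are nonnegative integers $c^{(i)}_k$ (finitely many nonzero) with $\sum_k c^{(i)}_k=(\mathbf{s}_{i-1})_1$ and $(\mathbf{s}_i)_k=(\mathbf{s}_{i-1})_{k+1}+c^{(i)}_k$ for all $k\ge1$. $\mathrm{JS}(\mathbf{a},\mathbf{b},n)$ is the set of these and $\mathsf{js}$ its cardinality. *)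

(* Defs.v *)
From HB Require Import structures.
From mathcomp Require Import all_boot all_order all_algebra.
Set Implicit Arguments. Unset Strict Implicit. Unset Printing Implicit Defensive.
Import Order.TTheory GRing.Theory Num.Theory.

Local Open Scope ring_scope.

(* Vectors of R^r with integer coordinates: row vectors 'rV[int]_r.
   Coordinate j (0-based) corresponds to epsilon_{j+1}. *)
Definition eps (r k : nat) : 'rV[int]_r := \row_(j < r) ((nat_of_ord j == k)%:R).

(* Index type for the positive roots of C_r:
   inl (i, j, false) : eps_i - eps_j  (i < j)
   inl (i, j, true)  : eps_i + eps_j  (i < j)
   inr i             : 2 eps_i *)
Definition rootC_idx (r : nat) : finType := (('I_r * 'I_r * bool) + 'I_r)%type.

Definition rootC_valid r (t : rootC_idx r) : bool :=
  match t with
  | inl (i, j, _) => (i < j)%N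
  | inr _ => true
  end.

Definition rootC_vec r (t : rootC_idx r) : 'rV[int]_r :=
  match t with
  | inl (i, j, false) => eps r i - eps r j
  | inl (i, j, true) => eps r i + eps r j
  | inr i => eps r i *+ 2
  end.

(* A partition of mu: a finite multiset of positive roots (multiplicity function,
   supported on genuine positive roots) summing to mu. *)
Definition is_partitionC r (mu : 'rV[int]_r) (m : {ffun rootC_idx r -> nat}) : bool :=
  [forall t, ~~ rootC_valid t ==> (m t == 0%N)] &&
  (\sum_(t : rootC_idx r) rootC_vec t *+ m t == mu).

Definition PartC r (mu : 'rV[int]_r) := {m : {ffun rootC_idx r -> nat} | is_partitionC mu m}.

Definition highestC r : 'rV[int]_r := eps r 0 *+ 2.

(* Juggling states: finitely supported integer vectors <s_1, s_2, ...>,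
   represented as seq int with trailing zeros omitted; s_k = nth 0 s k.-1. *)
Definition state_canonical (s : seq int) : bool := last 1 s != 0.

(* One throw step from s to t (0-based indices: height k+1 <-> index k). *)
Definition js_step (s t : seq int) : Prop :=
  exists c : seq nat,
    ((sumn c)%:Z = nth 0 s 0) /\
    (forall k : nat, nth 0 t k = nth 0 s k.+1 + (nth 0%N c k)%:Z).

Definition is_js (a b : seq int) (n : nat) (ss : seq (seq int)) : Prop :=
  [/\ size ss = n.+1,
      nth [::] ss 0 = a,
      nth [::] ss n = b,
      all state_canonical ss &
      forall i : nat, (i < n)%N -> js_step (nth [::] ss i) (nth [::] ss i.+1)].

Definition JS (a b : seq int) (n : nat) := {ss : seq (seq int) | is_js a b n ss}.

(* Main.v *)
Require Import Defs.
From HB Require Import structures.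
From mathcomp Require Import all_boot all_order all_algebra.
From mathcomp Require Import zify ring.
From Stdlib Require Import ProofIrrelevance FunctionalExtensionality.
Set Implicit Arguments. Unset Strict Implicit. Unset Printing Implicit Defensive.
Import Order.TTheory GRing.Theory Num.Theory.
Local Open Scope ring_scope.

Fixpoint trim (s : seq int) : seq int :=
  if s is x :: s' then
    (let t := trim s' in if (t == [::]) && (x == 0) then [::] else x :: t)
  else [::].

Lemma nth_trim s k : nth 0 (trim s) k = nth 0 s k.
Proof.
elim: s k => [|x s IH] k /=; first by rewrite !nth_nil.
case: ifP => [/andP[/eqP e /eqP ->]|_].
  by case: k => [|k] //=; rewrite -IH e nth_nil.
by case: k => [|k] //=.
Qed.

Lemma last_nonnil (x y : int) t : t != [::] -> last x t = last y t.
Proof. by case: t. Qed.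

Lemma trim_canon s : state_canonical (trim s).
Proof.
rewrite /state_canonical; elim: s => [|x s IH] //=.
case: ifP => [//|].
case E: (trim s == [::]) => /=.
  by rewrite (eqP E) /= => ->.
by move=> _ /=; rewrite (last_nonnil _ 1) ?E.
Qed.

Lemma canon_cons x s : state_canonical (x :: s) -> state_canonical s.
Proof. by case: s. Qed.

Lemma canon_zero t : state_canonical t -> (forall k, nth 0 t k = 0) -> t = [::].
Proof.
elim: t => [//|x t IH] C Z.
have x0 : x = 0 by apply: (Z 0%N).
have t0 : t = [::] by apply: IH => [|k]; [exact: canon_cons C| exact: (Z k.+1)].
by move: C; rewrite /state_canonical t0 x0.
Qed.

Lemma canon_eq s t : state_canonical s -> state_canonical t ->
  (forall k, nth 0 s k = nth 0 t k) -> s = t.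
Proof.
elim: s t => [|x s IH] t Cs Ct E.
  by rewrite (canon_zero Ct) // => k; rewrite -E nth_nil.
case: t Ct E => [|y t] Ct E.
  by rewrite (canon_zero Cs) // => k; rewrite E nth_nil.
have -> : x = y by apply: (E 0%N).
congr cons; apply: IH; [exact: canon_cons Cs|exact: canon_cons Ct|].
by move=> k; apply: (E k.+1).
Qed.

Lemma sum_trunc (f : nat -> nat) n N : (forall k, (n <= k)%N -> f k = 0%N) -> (n <= N)%N ->
  (\sum_(k < N) f k = \sum_(k < n) f k)%N.
Proof.
move=> Z le; rewrite -(subnKC le) big_split_ord /= [X in (_ + X)%N]big1 ?addn0 //.
by move=> k _; apply: Z; rewrite leq_addr.
Qed.

Lemma sumn_nth (c : seq nat) : sumn c = (\sum_(k < size c) nth 0%N c k)%N.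
Proof.
elim: c => [|x c IH] /=; first by rewrite big_ord0.
by rewrite big_ord_recl /= IH.
Qed.

Lemma sum1_unique (I : finType) (F : I -> nat) : (\sum_i F i = 1)%N ->
  exists i0, F i0 = 1%N /\ forall i, i != i0 -> F i = 0%N.
Proof.
move=> S.
case: (pickP (fun i => F i != 0%N)) => [i0 Hi0|Z]; last first.
  by move: S; rewrite big1 // => i _; apply/eqP; move: (Z i) => /= /negbFE.
move: S; rewrite (bigD1 i0) //= => S.
have H1 : F i0 = 1%N by move: Hi0 S; case: (F i0) => [|[|n]] //=; lia.
exists i0; split => // i ne.
have : (\sum_(i | i != i0) F i = 0)%N by lia.
by move/eqP; rewrite sum_nat_eq0 => /forallP/(_ i); rewrite ne => /implyP/(_ isT)/eqP.
Qed.

Section Main.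
Variable r : nat.
Hypothesis hr : (0 < r)%N.

Definition stv (arc : nat -> nat -> nat) (i k : nat) : int :=
  (2 * (i + k == 0%N) + \sum_(t < i) arc t (i + k))%N%:Z.

Definition st arc i : seq int := trim (mkseq (stv arc i) r.+2).

Definition fseq arc : seq (seq int) := mkseq (st arc) r.+1.

Definition F1 (arc : nat -> nat -> nat) := forall a b, ~~ ((a < b) && (b <= r))%N -> arc a b = 0%N.
Definition F2 (arc : nat -> nat -> nat) := forall i, (i < r)%N ->
  (\sum_(j < r.+1) arc i j = 2 * (i == 0%N) + \sum_(t < i) arc t i)%N.
Definition F3 (arc : nat -> nat -> nat) := (\sum_(t < r) arc t r = 2)%N.

Lemma nth_st arc i k : F1 arc -> nth 0 (st arc i) k = stv arc i k.
Proof.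
move=> f1; rewrite /st nth_trim.
case: (ltnP k r.+2) => lt; first by rewrite nth_mkseq.
rewrite nth_default ?size_mkseq // /stv.
have -> : (i + k == 0)%N = false by apply/eqP; lia.
rewrite big1 // => t _; apply: f1; apply/negP => /andP[_]; lia.
Qed.

Lemma st_two arc : F1 arc -> F3 arc -> st arc 0 = [:: Posz 2] /\ st arc r = [:: Posz 2].
Proof.
move=> f1 f3; split; apply: canon_eq; rewrite ?trim_canon // => k; rewrite nth_st // /stv.
  by rewrite big_ord0 add0n addn0; case: k => [|k] //=; rewrite nth_nil.
case: k => [|k]; first by rewrite addn0 f3; have -> : (r == 0)%N = false by lia.
rewrite big1 => [|t _]; last by apply: f1; apply/negP => /andP[_]; lia.
by rewrite addn0 /= nth_nil; have -> : (r + k.+1 == 0)%N = false by lia.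
Qed.

Lemma js_of_flow arc : F1 arc -> F2 arc -> F3 arc -> is_js [:: Posz 2] [:: Posz 2] r (fseq arc).
Proof.
move=> f1 f2 f3; have [s0 sr] := st_two f1 f3.
split; rewrite /fseq ?size_mkseq //.
all: try by rewrite nth_mkseq // ?s0 ?sr.
- by apply/allP => s /mapP [i _ ->]; exact: trim_canon.
move=> i ir; rewrite !nth_mkseq ?(ltnW ir) //; last by lia.
exists (mkseq (fun k => arc i (i + k.+1)%N) r.+1).
have nc : forall k, nth 0%N (mkseq (fun k => arc i (i + k.+1)%N) r.+1) k = arc i (i + k.+1)%N.
  move=> k; case: (ltnP k r.+1) => lt; first by rewrite nth_mkseq.
  by rewrite nth_default ?size_mkseq // f1 //; apply/negP => /andP[_]; lia.
have key : (\sum_(k < r.+1) arc i (i + k.+1) = \sum_(j < r.+1) arc i j)%N.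
  have Z : forall k, (r - i <= k)%N -> arc i (i + k.+1) = 0%N.
    by move=> k le; apply: f1; apply/negP => /andP[_]; lia.
  rewrite (@sum_trunc (fun k => arc i (i + k.+1)%N) (r - i) r.+1 Z); last by lia.
  have -> : r.+1 = (i.+1 + (r - i))%N by lia.
  rewrite big_split_ord /=.
  have -> : (\sum_(j < i.+1) arc i (lshift (r - i) j) = 0)%N.
    by apply: big1 => j _; apply: f1; apply/negP => /andP; case: j => /= j; lia.
  by rewrite add0n; apply: eq_bigr => j _; rewrite addSnnS.
split.
  rewrite nth_st // /stv addn0 -f2 // sumn_nth size_mkseq -key.
  by congr Posz; apply: eq_bigr => k _; rewrite nc.
move=> k; rewrite nc !nth_st // /stv big_ord_recr /=.
have -> : (i + k.+1 == 0)%N = false by lia.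
by rewrite -PoszD; congr Posz; rewrite !addSnnS; lia.
Qed.

End Main.

Section Jug.
Variable r : nat.
Hypothesis hr : (0 < r)%N.

Definition cJ (ss : seq (seq int)) i k : nat :=
  absz (nth (0:int) (nth [::] ss i.+1) k - nth (0:int) (nth [::] ss i) k.+1)%R.
Definition arcJ ss (a b : nat) : nat := if (a < b)%N then cJ ss a (b - a.+1) else 0%N.

Lemma J_step ss i : is_js [:: Posz 2] [:: Posz 2] r ss -> (i < r)%N ->
  exists c : seq nat, (sumn c)%:Z = nth 0 (nth [::] ss i) 0 /\
   forall k, cJ ss i k = nth 0%N c k /\
     nth 0 (nth [::] ss i.+1) k = nth 0 (nth [::] ss i) k.+1 + (nth 0%N c k)%:Z.
Proof.
case=> _ _ _ _ st ir; have [c [sc ec]] := st i ir.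
exists c; split => // k; split => //.
by rewrite /cJ ec addrAC subrr add0r.
Qed.

Lemma J1 ss : is_js [:: Posz 2] [:: Posz 2] r ss ->
  forall i, (i <= r)%N -> forall k, nth 0 (nth [::] ss i) k = stv (arcJ ss) i k.
Proof.
move=> H; elim=> [|i IH] ir k.
  case: H => _ -> _ _ _; rewrite /stv big_ord0 addn0 add0n.
  by case: k => [|k] //=; rewrite nth_nil.
have [c [_ ec]] := J_step (i:=i) H ir.
have [e1 e2] := ec k; rewrite e2 IH ?(ltnW ir) // /stv big_ord_recr /= -e1.
have -> : (i + k.+1 == 0)%N = false by lia.
rewrite -PoszD /arcJ; congr Posz.
have -> : (i < i.+1 + k)%N by lia.
have -> : (i.+1 + k - i.+1 = k)%N by lia.
by rewrite !addSnnS.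
Qed.

Lemma J_F1 ss : is_js [:: Posz 2] [:: Posz 2] r ss -> F1 r (arcJ ss).
Proof.
move=> H a b nab; rewrite /arcJ; case: ifP => ab //.
have br : (r < b)%N by move: nab; rewrite ab /=; lia.
have [sz _ er _ _] := H.
case: (ltnP a r) => ar.
  have := J1 H (leqnn r) (b - r)%N; rewrite er.
  have -> : [:: Posz 2]`_(b - r)%N = 0.
    by case E: (b - r)%N => [|n]; [lia| rewrite /= nth_nil].
  rewrite /stv => E.
  have E2 : (\sum_(t < r) arcJ ss t (r + (b - r)) = 0)%N by lia.
  move/eqP: E2; rewrite sum_nat_eq0 => /forallP /(_ (Ordinal ar)) /=.
  have -> : (r + (b - r) = b)%N by lia.
  by rewrite /arcJ ab => /eqP.
rewrite /cJ (nth_default [::] (_ : size ss <= a.+1)%N) ?sz // nth_nil.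
case: (ltnP r a) => ra.
  by rewrite (nth_default [::] (_ : size ss <= a)%N) ?sz // nth_nil.
have -> : a = r by lia.
by rewrite er /= nth_nil.
Qed.

Lemma J_F2 ss : is_js [:: Posz 2] [:: Posz 2] r ss -> F2 r (arcJ ss).
Proof.
move=> H i ir.
have [c [sc ec]] := J_step (i:=i) H ir.
have f1 := J_F1 H.
have := J1 H (ltnW ir) 0%N; rewrite -sc /stv addn0 => /eqP; rewrite eqz_nat => /eqP <-.
have Z : forall k, (r - i <= k)%N -> arcJ ss i (i + k.+1) = 0%N.
  by move=> k le; apply: f1; apply/negP => /andP[_]; lia.
have ck : forall k, nth 0%N c k = arcJ ss i (i + k.+1).
  move=> k; have [<- _] := ec k; rewrite /arcJ.
  have -> : (i < i + k.+1)%N by lia.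
  by have -> : (i + k.+1 - i.+1 = k)%N by lia.
rewrite sumn_nth.
rewrite -(@sum_trunc (fun k => nth 0%N c k) (size c) (maxn (size c) (r - i))); last 2 first.
- by move=> k le; rewrite nth_default.
- exact: leq_maxl.
rewrite (@sum_trunc (fun k => nth 0%N c k) (r - i) (maxn (size c) (r - i))); last 2 first.
- by move=> k le; rewrite ck Z.
- exact: leq_maxr.
have -> : r.+1 = (i.+1 + (r - i))%N by lia.
rewrite big_split_ord /=.
have -> : (\sum_(j < i.+1) arcJ ss i (lshift (r - i) j) = 0)%N.
  by apply: big1 => j _; apply: f1; apply/negP => /andP; case: j => /= j; lia.
by rewrite add0n; apply: eq_bigr => j _; rewrite ck addSnnS.
Qed.

Lemma J_F3 ss : is_js [:: Posz 2] [:: Posz 2] r ss -> F3 r (arcJ ss).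
Proof.
move=> H; have := J1 H (leqnn r) 0%N; have [_ _ -> _ _] := H.
rewrite /stv addn0 /= => /eqP; rewrite eqz_nat => /eqP E.
rewrite /F3; move: E; have -> : (r == 0)%N = false by lia.
by rewrite muln0 add0n => <-.
Qed.

End Jug.

Section Part.
Variable r : nat.
Hypothesis hr : (0 < r)%N.

Implicit Types m : {ffun rootC_idx r -> nat}.

Definition outF m (j : 'I_r) : nat := \sum_(b : 'I_r) m (inl (j, b, false)).
Definition inF m (j : 'I_r) : nat := \sum_(a : 'I_r) m (inl (a, j, false)).
Definition degO m (j : 'I_r) : nat :=
  2 * m (inr j) + \sum_(b : 'I_r) (m (inl (j, b, true)) + m (inl (b, j, true))).

Lemma sum_only (F : 'I_r -> int) j : (forall a, a != j -> F a = 0) -> \sum_a F a = F j.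
Proof. by move=> Z; rewrite (bigD1 j) //= big1 ?addr0 // => a /Z. Qed.

Lemma sum_triple (G : 'I_r * 'I_r * bool -> int) :
  \sum_p G p = \sum_a \sum_b (G (a, b, false) + G (a, b, true)).
Proof.
rewrite (eq_bigr (fun p => G (p.1, p.2))) => [|[]//].
rewrite -(pair_bigA _ (fun ab s => G (ab, s))).
rewrite (eq_bigr (fun ab => G (ab, false) + G (ab, true))) => [|ab _]; last by rewrite big_bool addrC.
rewrite (eq_bigr (fun ab => G (ab.1, ab.2, false) + G (ab.1, ab.2, true))) => [|[]//].
by rewrite -(pair_bigA _ (fun a b => G (a, b, false) + G (a, b, true))).
Qed.

Lemma Lrow (F : 'I_r -> 'I_r -> nat) j :
  \sum_a \sum_b ((j == a)%:R *+ F a b) = (\sum_b F j b)%:Z :> int.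
Proof.
rewrite (@sum_only _ j) => [|a ne]; last first.
  by apply: big1 => b _; rewrite eq_sym (negbTE ne) mul0rn.
rewrite eqxx -natz natr_sum; apply: eq_bigr => b _.
by rewrite -mulrnA mul1n.
Qed.

Lemma Lcol (F : 'I_r -> 'I_r -> nat) j :
  \sum_a \sum_b ((j == b)%:R *+ F a b) = (\sum_a F a j)%:Z :> int.
Proof.
rewrite exchange_big /= (@sum_only _ j) => [|a ne]; last first.
  by apply: big1 => b _; rewrite eq_sym (negbTE ne) mul0rn.
rewrite eqxx -natz natr_sum; apply: eq_bigr => b _.
by rewrite -mulrnA mul1n.
Qed.

Lemma coordP m j : (\sum_t rootC_vec t *+ m t) 0 j =
  (outF m j)%:Z - (inF m j)%:Z + (degO m j)%:Z.
Proof.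
rewrite summxE big_sumType /= sum_triple.
rewrite (eq_bigr (fun a => \sum_b ((((j == a)%:R - (j == b)%:R) *+ m (inl (a, b, false))) + (((j == a)%:R + (j == b)%:R) *+ m (inl (a, b, true)))))); last first.
  by move=> a _; apply: eq_bigr => b _; rewrite !mulmxnE /= !mxE.
rewrite [X in _ + X = _](eq_bigr (fun i => (j == i)%:R *+ (2 * m (inr i)))); last first.
  by move=> i _; rewrite !mulmxnE !mxE mulrnA.
rewrite [X in X + _ = _](eq_bigr (fun a => \sum_b ((j == a)%:R *+ m (inl (a, b, false))) - \sum_b ((j == b)%:R *+ m (inl (a, b, false))) + (\sum_b ((j == a)%:R *+ m (inl (a, b, true))) + \sum_b ((j == b)%:R *+ m (inl (a, b, true)))))); last first.
  by move=> a _; rewrite -sumrB -big_split -big_split /=; apply: eq_bigr => b _; rewrite mulrnBl mulrnDl.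
rewrite !big_split /= sumrN Lrow Lcol Lrow Lcol.
rewrite (@sum_only _ j) => [|a ne]; last by rewrite eq_sym (negbTE ne) mul0rn.
rewrite eqxx -mulrnA mul1n natz /degO /outF /inF PoszD big_split /= PoszD.
rewrite -!natz !natr_sum; ring.
Qed.
End Part.

Lemma stv_succ arc i k : stv arc i.+1 k = stv arc i k.+1 + (arc i (i + k.+1)%N)%:Z.
Proof.
rewrite /stv big_ord_recr /=.
have -> : (i + k.+1 == 0)%N = false by lia.
by rewrite -PoszD; congr Posz; rewrite !addSnnS; lia.
Qed.

Lemma sum_onlyN (I : finType) (F : I -> nat) j : (forall a, a != j -> F a = 0%N) -> (\sum_a F a = F j)%N.
Proof. by move=> Z; rewrite (bigD1 j) //= big1 ?addn0 // => a /Z. Qed.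

Section Part2.
Variable r : nat.
Hypothesis hr : (0 < r)%N.

Implicit Types m : {ffun rootC_idx r -> nat}.

Definition mmF m (a b : nat) : nat :=
  match (insub a : option 'I_r), (insub b : option 'I_r) with
  | Some oa, Some ob => m (inl (oa, ob, false))
  | _, _ => 0%N end.
Definition degN m (a : nat) : nat :=
  if (insub a : option 'I_r) is Some oa then degO m oa else 0%N.
Definition arcP m (a b : nat) : nat :=
  if (a < b)%N && (b < r)%N then mmF m a b
  else if (b == r) && (a < r)%N then degN m a else 0%N.

Lemma mmF_ord m (oa ob : 'I_r) : mmF m oa ob = m (inl (oa, ob, false)).
Proof. by rewrite /mmF !valK. Qed.
Lemma degN_ord m (oa : 'I_r) : degN m oa = degO m oa.
Proof. by rewrite /degN valK. Qed.

Definition gfun (arc : nat -> nat -> nat) : {ffun rootC_idx r -> nat} :=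
  [ffun t : rootC_idx r => match t with
   | inl (a, b, false) => if (a < b)%N then arc a b else 0%N
   | inl (a, b, true) => if (a < b)%N then (arc a r * arc b r)%N else 0%N
   | inr i => nat_of_bool (arc i r == 2%N) end].

Lemma valid0 m t : is_partitionC (highestC r) m -> ~~ rootC_valid t -> m t = 0%N.
Proof. by case/andP => /forallP /(_ t) /implyP V _ /V /eqP. Qed.

Lemma highE (j : 'I_r) : (highestC r) 0 j = (2 * (nat_of_ord j == 0%N))%N%:Z.
Proof. by rewrite /highestC mulmxnE mxE -mulrnA natz mulnC. Qed.

Lemma P_cons m j : is_partitionC (highestC r) m ->
  (outF m j + degO m j = 2 * (nat_of_ord j == 0%N) + inF m j)%N.
Proof.
move=> H; have := coordP m j; case/andP: H => _ /eqP ->; rewrite highE; lia.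
Qed.

Lemma P_sumdeg m : is_partitionC (highestC r) m -> (\sum_j degO m j = 2)%N.
Proof.
move=> H.
have E : (\sum_j (outF m j + degO m j) = \sum_j (2 * (nat_of_ord j == 0%N) + inF m j))%N.
  by apply: eq_bigr => j _; apply: P_cons.
rewrite big_split /= [X in _ = X]big_split /= in E; move: E.
have -> : (\sum_j outF m j = \sum_j inF m j)%N by rewrite /outF /inF exchange_big.
rewrite (@sum_onlyN _ (fun j : 'I_r => 2 * (nat_of_ord j == 0%N))%N (Ordinal hr)); first by rewrite /=; lia.
by move=> a ne; rewrite (_ : (nat_of_ord a == 0%N) = false) //; apply/negbTE; move: ne; apply: contra => /eqP e; apply/eqP/val_inj.
Qed.

Lemma P_plus m : is_partitionC (highestC r) m ->
  (\sum_i m (inr i) + \sum_a \sum_b m (inl (a, b, true)) = 1)%N.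
Proof.
move=> H; have := P_sumdeg H; rewrite /degO big_split /= -big_distrr /=.
have -> : (\sum_i \sum_b (m (inl (i, b, true)) + m (inl (b, i, true))) =
   2 * \sum_a \sum_b m (inl (a, b, true)))%N.
  under eq_bigr => a _ do rewrite big_split.
  rewrite big_split /= [X in (_ + X)%N]exchange_big /=; lia.
move=> E; apply/eqP; rewrite -(eqn_pmul2l (_ : 0 < 2)%N) // mulnDr muln1; apply/eqP; exact: E.
Qed.

Lemma arcP_F1 m : F1 r (arcP m).
Proof.
move=> a b; rewrite /arcP; case: ifP => [/andP[ab br]|_]; first by rewrite ab /= ltnW.
by case: ifP => // /andP[/eqP -> ar]; rewrite ar leqnn.
Qed.

Lemma arcP_row m (i : 'I_r) : is_partitionC (highestC r) m ->
  (\sum_(j < r) arcP m i j = outF m i)%N.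
Proof.
move=> H; apply: eq_bigr => j _; rewrite /arcP ltn_ord andbT.
case: ifP => ij; first by rewrite mmF_ord.
have -> : (nat_of_ord j == r) = false by apply/negbTE; rewrite neq_ltn ltn_ord.
by rewrite (valid0 H) //= ij.
Qed.

Lemma arcP_col m (i : 'I_r) : is_partitionC (highestC r) m ->
  (\sum_(t < r) arcP m t i = inF m i)%N.
Proof.
move=> H; apply: eq_bigr => j _; rewrite /arcP ltn_ord andbT.
case: ifP => ij; first by rewrite mmF_ord.
have -> : (nat_of_ord i == r) = false by apply/negbTE; rewrite neq_ltn ltn_ord.
by rewrite (valid0 H) //= ij.
Qed.

Lemma arcP_flow m : is_partitionC (highestC r) m ->
  [/\ F1 r (arcP m), F2 r (arcP m) & F3 r (arcP m)].
Proof.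
move=> H; split; first exact: arcP_F1.
  move=> i ir; have := P_cons (Ordinal ir) H => /=.
  rewrite big_ord_recr /= (arcP_row (Ordinal ir) H) -(arcP_col (Ordinal ir) H) /=.
  rewrite (@sum_trunc (fun t => arcP m t i) i r); last 2 first.
  - move=> k le; apply: arcP_F1; apply/negP => /andP[]; lia.
  - exact: ltnW.
  have -> : arcP m i r = degO m (Ordinal ir).
    by rewrite /arcP ltnn andbF eqxx ir (degN_ord m (Ordinal ir)).
  exact: id.
rewrite /F3 -(P_sumdeg H); apply: eq_bigr => j _.
by rewrite /arcP ltnn andbF eqxx ltn_ord degN_ord.
Qed.

End Part2.

Section Bij.
Variable r : nat.
Hypothesis hr : (0 < r)%N.

Lemma deg_gfun arc : F3 r arc -> forall j : 'I_r, degO (gfun r arc) j = arc j r.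
Proof.
move=> f3 j; rewrite /degO !ffunE.
have le2 : (arc j r <= 2)%N.
  by rewrite -f3 (bigD1 j) //= leq_addr.
have E : (\sum_(b : 'I_r) (gfun r arc (inl (j, b, true)) + gfun r arc (inl (b, j, true)))
     = arc j r * (2 - arc j r))%N.
  rewrite (bigD1 j) //= !ffunE ltnn add0n.
  rewrite (eq_bigr (fun b : 'I_r => arc j r * arc b r)%N); last first.
    move=> b bj; rewrite !ffunE.
    case: (ltngtP j b) => h; rewrite ?addn0 ?add0n //; first by rewrite mulnC.
    by move: bj; rewrite (val_inj h) eqxx.
  rewrite -big_distrr /=; congr (_ * _)%N.
  by move: f3; rewrite /F3 (bigD1 j) //= => <-; rewrite addKn.
rewrite E; move: le2; case: (arc j r) => [|[|[|n]]] //.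
Qed.

Lemma gfun_part arc : F1 r arc -> F2 r arc -> F3 r arc -> is_partitionC (highestC r) (gfun r arc).
Proof.
move=> f1 f2 f3; apply/andP; split.
  by apply/forallP => -[[[a b] []]|i] //=; rewrite /gfun ffunE /=; case: ifP.
apply/eqP/rowP => j; rewrite coordP highE deg_gfun //.
have jr := ltn_ord j.
have := f2 j jr; rewrite big_ord_recr /=.
have -> : (outF (gfun r arc) j = \sum_(b < r) arc j b)%N.
  apply: eq_bigr => b _; rewrite ffunE; case: ifP => // h.
  by rewrite f1 // h.
have -> : (inF (gfun r arc) j = \sum_(t < j) arc t j)%N.
  rewrite -(@sum_trunc (fun t => arc t j) j r) ?(ltnW jr) //; last first.
    by move=> k le; apply: f1; apply/negP => /andP[]; lia.
  apply: eq_bigr => b _; rewrite ffunE; case: ifP => // h.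
  by rewrite f1 // h.
move=> E; have E' : (\sum_(b < r) arc j b + arc j r = 2 * (nat_of_ord j == 0%N) + \sum_(t < j) arc t j)%N := E.
lia.
Qed.

End Bij.

Section Bij2.
Variable r : nat.
Hypothesis hr : (0 < r)%N.

Lemma arcJ_fseq arc : F1 r arc -> F2 r arc -> F3 r arc ->
  forall a b, arcJ (fseq r arc) a b = arc a b.
Proof.
move=> f1 f2 f3 a b; have H := js_of_flow hr f1 f2 f3.
case: (boolP ((a < b) && (b <= r))%N) => [/andP[ab br] | n]; last by rewrite (J_F1 hr H) // f1.
rewrite /arcJ ab /cJ /fseq !nth_mkseq; [| lia | lia].
rewrite !nth_st // stv_succ.
have -> : (a + (b - a.+1).+1 = b)%N by lia.
by rewrite addrAC subrr add0r.
Qed.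

Lemma fseq_arcJ ss : is_js [:: Posz 2] [:: Posz 2] r ss -> fseq r (arcJ ss) = ss.
Proof.
move=> H; have [sz _ _ ca _] := H.
apply: (@eq_from_nth _ [::]); first by rewrite size_mkseq sz.
move=> i; rewrite size_mkseq => ir; rewrite /fseq nth_mkseq //.
apply: canon_eq; first exact: trim_canon.
  by apply: (allP ca); rewrite mem_nth // sz.
move=> k; rewrite nth_st //; last exact: (@J_F1 r hr ss H).
by rewrite (J1 hr H) // -ltnS.
Qed.

Lemma arcP_gfun arc : F1 r arc -> F3 r arc -> forall a b, arcP (gfun r arc) a b = arc a b.
Proof.
move=> f1 f3 a b; rewrite /arcP.
case: ifP => [/andP[ab br]|h1].
  have ar : (a < r)%N by lia.
  rewrite -[a]/(nat_of_ord (Ordinal ar)) -[b]/(nat_of_ord (Ordinal br)) mmF_ord ffunE /=.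
  by rewrite ab.
case: ifP => [/andP[/eqP -> ar]|h2].
  by rewrite -[a]/(nat_of_ord (Ordinal ar)) degN_ord deg_gfun.
rewrite f1 //; apply/negP => /andP[ab br].
move: h1 h2; rewrite ab /=; case: ltngtP br => //; lia.
Qed.

End Bij2.

Section Bij3.
Variable r : nat.
Hypothesis hr : (0 < r)%N.
Implicit Types m : {ffun rootC_idx r -> nat}.

Lemma deg_props m : is_partitionC (highestC r) m ->
  (forall a b : 'I_r, (a < b)%N -> (degO m a * degO m b)%N = m (inl (a, b, true))) /\
  (forall i, nat_of_bool (degO m i == 2%N) = m (inr i)).
Proof.
move=> H; have P := P_plus hr H.
case: (ltnP 0 (\sum_i m (inr i))) => pos.
  have S1 : (\sum_i m (inr i) = 1)%N by lia.
  have S2 : (\sum_a \sum_b m (inl (a, b, true)) = 0)%N by lia.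
  have [i0 [m1 m0]] := sum1_unique S1.
  have Z : forall a b, m (inl (a, b, true)) = 0%N.
    move=> a b; move/eqP: S2; rewrite sum_nat_eq0 => /forallP/(_ a) /=.
    by rewrite sum_nat_eq0 => /forallP/(_ b)/eqP.
  have D : forall j, degO m j = (2 * (j == i0))%N.
    move=> j; rewrite /degO big1 ?addn0 => [|b _]; last by rewrite !Z.
    by case: (eqVneq j i0) => [->|ne]; [rewrite m1 | rewrite m0].
  split.
    move=> a b ab; rewrite !D Z -!val_eqE /=.
    have : (nat_of_ord a < nat_of_ord b)%N := ab. nia.
  by move=> i; rewrite D; case: (eqVneq i i0) => [->|ne]; [rewrite m1 | rewrite m0].
have S2 : (\sum_a \sum_b m (inl (a, b, true)) = 1)%N by lia.
rewrite pair_bigA /= in S2.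
have [p0 [m1 m0]] := sum1_unique S2.
move: p0 m1 m0 => [a0 b0] /= m1 m0.
have Zi : forall i, m (inr i) = 0%N.
  move=> i; have : (\sum_i m (inr i) == 0)%N by rewrite -leqn0.
  by rewrite sum_nat_eq0 => /forallP/(_ i)/eqP.
have ab0 : (a0 < b0)%N.
  by case: (ltnP a0 b0) => // h; move: m1; rewrite (valid0 H) //= -leqNgt.
have MT : forall a b, m (inl (a, b, true)) = ((a == a0) && (b == b0)) :> nat.
  move=> a b; case E: ((a == a0) && (b == b0)).
    by move/andP: E => [/eqP -> /eqP ->]; rewrite m1.
  by rewrite (m0 (a, b)) // xpair_eqE E.
have D : forall j, degO m j = ((j == a0) + (j == b0))%N.
  move=> j; rewrite /degO Zi muln0 add0n big_split /=.
  under eq_bigr => b _ do rewrite MT.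
  under [X in (_ + X)%N]eq_bigr => b _ do rewrite MT.
  rewrite (@sum_onlyN _ (fun b : 'I_r => nat_of_bool ((j == a0) && (b == b0))) b0); last first.
    by move=> b /negbTE ->; rewrite andbF.
  rewrite (@sum_onlyN _ (fun b : 'I_r => nat_of_bool ((b == a0) && (j == b0))) a0); last first.
    by move=> b /negbTE ->.
  by rewrite !eqxx andbT.
split.
  move=> a b ab; rewrite !D MT -!val_eqE /=.
  have : (nat_of_ord a < nat_of_ord b)%N := ab.
  have : (nat_of_ord a0 < nat_of_ord b0)%N := ab0.
  nia.
move=> i; rewrite D Zi -!val_eqE /=.
have : (nat_of_ord a0 < nat_of_ord b0)%N := ab0.
case: eqP; case: eqP => //=; lia.
Qed.

Lemma arcP_r m (a : 'I_r) : arcP m a r = degO m a.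
Proof. by rewrite /arcP ltnn andbF eqxx ltn_ord degN_ord. Qed.

Lemma gfun_arcP m : is_partitionC (highestC r) m -> gfun r (arcP m) = m.
Proof.
move=> H; have [D1 D2] := deg_props H.
apply/ffunP => -[[[a b] []]|i]; rewrite ffunE /=.
- case: ifP => ab; first by rewrite !arcP_r D1.
  by rewrite (valid0 H) //= ab.
- case: ifP => ab; first by rewrite /arcP ab ltn_ord mmF_ord.
  by rewrite (valid0 H) //= ab.
- by rewrite arcP_r D2.
Qed.

End Bij3.

Lemma sig_eqP (A : Type) (P : A -> Prop) (x y : {a | P a}) : proj1_sig x = proj1_sig y -> x = y.
Proof. by case: x => x px; case: y => y py /= E; subst; f_equal; apply: proof_irrelevance. Qed.

Theorem mainTheorem12 (r : nat) (hr : (3 <= r)%N) :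
  exists f : PartC (highestC r) -> JS [:: Posz 2] [:: Posz 2] r, bijective f.
Proof.
have hr0 : (0 < r)%N by lia.
have jsP : forall m, is_partitionC (highestC r) m -> is_js [:: Posz 2] [:: Posz 2] r (fseq r (arcP m)).
  by move=> m H; case: (arcP_flow hr0 H) => f1 f2 f3; exact: js_of_flow.
have ptP : forall ss, is_js [:: Posz 2] [:: Posz 2] r ss -> is_partitionC (highestC r) (gfun r (arcJ ss)).
  by move=> ss H; apply: gfun_part => //; [exact: (J_F1 hr0 H) | exact: (J_F2 hr0 H) | exact: (J_F3 hr0 H)].
exists (fun m : PartC (highestC r) => exist _ (fseq r (arcP (proj1_sig m))) (jsP _ (proj2_sig m))).
exists (fun ss : JS [:: Posz 2] [:: Posz 2] r => exist _ (gfun r (arcJ (proj1_sig ss))) (ptP _ (proj2_sig ss)) : PartC (highestC r)).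
- move=> [m Hm]; apply: val_inj => /=.
  case: (arcP_flow hr0 Hm) => f1 f2 f3.
  have -> : arcJ (fseq r (arcP m)) = arcP m.
    by apply: functional_extensionality => a; apply: functional_extensionality => b; apply: arcJ_fseq.
  exact: gfun_arcP.
- move=> [ss Hs]; apply: sig_eqP => /=.
  have -> : arcP (gfun r (arcJ ss)) = arcJ ss.
    apply: functional_extensionality => a; apply: functional_extensionality => b.
    by apply: (arcP_gfun hr0); [exact (J_F1 hr0 Hs) | exact (J_F3 hr0 Hs)].
  exact: fseq_arcJ.
Qed.
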